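(* Let $G$ be a permutation group admitting a base $B$ of open subgroups such that for every pair $V\subseteq U$ in $B$ the group $N_G(V)/V$ is finite and $(G/U)^V=N_G(V)U/U$. Let $R$ be an associative ring and $M$ an $R\otimes\mathbb Q$-module, considered as an $R\langle G\rangle$-module with trivial $G$-action. Then every essential extension $E$ of $M$ in $\mathrm{Sm}_R(G)$ is a trivial $G$-module. In particular, if $M=M\otimes\mathbb Q$ is an injective $R$-module, then $M$ (with trivial $G$-action) is an injective object of $\mathrm{Sm}_R(G)$.
   Context: A permutation group is a Hausdorff topological group admitting a base of open sets consisting of left and right translates of subgroups. $R\langle G\rangle$ is the group ring ($G$ acts trivially on $R$); $\mathrm{Sm}_R(G)$ is the category of smooth left $R\langle G\rangle$-modules (every element has an open stabilizer). $(G/U)^V$ is the set of $V$-fixed points of $G/U$. An injection $M\hookrightarrow E$ is an essential extension if every non-zero subobject of $E$ meets $M$ non-trivially. *)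

(* Defs.v *)
From HB Require Import structures.
From mathcomp Require Import all_boot all_order all_algebra.
From mathcomp Require Import boolp classical_sets cardinality topology.
Set Implicit Arguments. Unset Strict Implicit. Unset Printing Implicit Defensive.
Import GRing.Theory.
Local Open Scope classical_set_scope.
Local Open Scope ring_scope.

Section GroupDefs.
Variables (G : Type) (mul : G -> G -> G) (inv : G -> G) (one : G).

Definition is_group : Prop :=
  [/\ (forall x y z, mul x (mul y z) = mul (mul x y) z),
      (forall x, mul one x = x), (forall x, mul x one = x),
      (forall x, mul (inv x) x = one) & (forall x, mul x (inv x) = one)].

Definition is_subgroup (H : set G) : Prop :=
  [/\ H one, (forall x y, H x -> H y -> H (mul x y)) & (forall x, H x -> H (inv x))].

Definition lcoset (g : G) (H : set G) : set G := [set mul g h | h in H].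
Definition rcoset (H : set G) (g : G) : set G := [set mul h g | h in H].

Definition normalizer (V : set G) : set G :=
  [set g | [set mul (mul g v) (inv g) | v in V] = V].
End GroupDefs.

Definition topological_group (G : topologicalType) (mul : G -> G -> G)
  (inv : G -> G) (one : G) : Prop :=
  [/\ is_group mul inv one,
      continuous (fun p : G * G => mul p.1 p.2) & continuous inv].

Definition permutation_group (G : topologicalType) (mul : G -> G -> G)
  (inv : G -> G) (one : G) : Prop :=
  [/\ topological_group mul inv one, hausdorff_space G &
      forall (A : set G) (x : G), open A -> A x ->
        exists (H : set G) (g : G) (T : set G),
          [/\ is_subgroup mul inv one H,
              T = lcoset mul g H \/ T = rcoset mul H g,
              open T, T x & T `<=` A]].

Definition open_subgroup_base (G : topologicalType) (mul : G -> G -> G)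
  (inv : G -> G) (one : G) (B : set (set G)) : Prop :=
  (forall U, B U -> is_subgroup mul inv one U /\ open U) /\
  (forall N, nbhs one N -> exists2 U, B U & U `<=` N).

(* (G/U)^V : the left cosets gU fixed by every v in V *)
Definition fixed_cosets (G : Type) (mul : G -> G -> G) (U V : set G) : set (set G) :=
  [set lcoset mul g U | g in [set g | forall v, V v -> lcoset mul (mul v g) U = lcoset mul g U]].

Definition Rlinear (R : pzRingType) (A B : lmodType R) (f : A -> B) : Prop :=
  forall (a : R) (x y : A), f (a *: x + y) = a *: f x + f y.

Definition is_action (G : Type) (mul : G -> G -> G) (one : G)
  (R : pzRingType) (E : lmodType R) (act : G -> E -> E) : Prop :=
  [/\ (forall x, act one x = x),
      (forall g h x, act (mul g h) x = act g (act h x)) &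
      (forall g, Rlinear (act g))].

Definition smooth_action (G : topologicalType) (R : pzRingType) (E : lmodType R)
  (act : G -> E -> E) : Prop :=
  forall x : E, open [set g : G | act g x = x].

Definition smooth_module (G : topologicalType) (mul : G -> G -> G) (one : G)
  (R : pzRingType) (E : lmodType R) (act : G -> E -> E) : Prop :=
  is_action mul one act /\ smooth_action act.

Definition trivial_action (G : Type) (R : pzRingType) (E : lmodType R) : G -> E -> E :=
  fun _ x => x.

Definition Gmorphism (G : Type) (R : pzRingType) (A B : lmodType R)
  (actA : G -> A -> A) (actB : G -> B -> B) (f : A -> B) : Prop :=
  Rlinear f /\ (forall g x, f (actA g x) = actB g (f x)).

Definition subobject (G : Type) (R : pzRingType) (E : lmodType R)
  (act : G -> E -> E) (S : set E) : Prop :=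
  [/\ S 0, (forall (a : R) x y, S x -> S y -> S (a *: x + y)) &
      (forall g x, S x -> S (act g x))].

Definition essential_extension (G : Type) (R : pzRingType) (M E : lmodType R)
  (actM : G -> M -> M) (actE : G -> E -> E) (i : M -> E) : Prop :=
  [/\ Gmorphism actM actE i, injective i &
      forall S : set E, subobject actE S -> S <> [set 0] ->
        exists m : M, i m <> 0 /\ S (i m)].

(* M is an R (x) Q - module: multiplication by every positive integer is bijective *)
Definition uniquely_divisible (R : pzRingType) (M : lmodType R) : Prop :=
  forall n : nat, (0 < n)%N -> bijective (fun x : M => x *+ n).

Definition injective_Rmodule (R : pzRingType) (M : lmodType R) : Prop :=
  forall (A B : lmodType R) (f : A -> B) (h : A -> M),
    Rlinear f -> injective f -> Rlinear h ->
    exists k : B -> M, Rlinear k /\ (forall x, k (f x) = h x).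

(* injective object of Sm_R(G) (monomorphisms in Sm_R(G) are the injective morphisms) *)
Definition injective_smooth (G : topologicalType) (mul : G -> G -> G) (one : G)
  (R : pzRingType) (M : lmodType R) (actM : G -> M -> M) : Prop :=
  forall (A B : lmodType R) (actA : G -> A -> A) (actB : G -> B -> B)
         (f : A -> B) (h : A -> M),
    smooth_module mul one actA -> smooth_module mul one actB ->
    Gmorphism actA actB f -> injective f -> Gmorphism actA actM h ->
    exists k : B -> M, Gmorphism actB actM k /\ (forall x, k (f x) = h x).

(* Main.v *)
Require Import Defs.
From HB Require Import structures.
From mathcomp Require Import all_boot all_order all_algebra.
From mathcomp Require Import boolp classical_sets cardinality topology.
Set Implicit Arguments. Unset Strict Implicit. Unset Printing Implicit Defensive.
Import GRing.Theory.
Local Open Scope classical_set_scope.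
Local Open Scope ring_scope.

Lemma linD (R : pzRingType) (X Y : lmodType R) (F : X -> Y) x y : Rlinear F -> F (x + y) = F x + F y.
Proof. by move=> hF; have := hF 1 x y; rewrite !scale1r. Qed.
Lemma lin0 (R : pzRingType) (X Y : lmodType R) (F : X -> Y) : Rlinear F -> F 0 = 0.
Proof. move=> hF; have := linD 0 0 hF; rewrite addr0 => /(congr1 (fun z => z - F 0)); by rewrite subrr addrK. Qed.
Lemma linZ (R : pzRingType) (X Y : lmodType R) (F : X -> Y) a x : Rlinear F -> F (a *: x) = a *: F x.
Proof. by move=> hF; have := hF a x 0; rewrite !addr0 lin0 // addr0. Qed.
Lemma linB (R : pzRingType) (X Y : lmodType R) (F : X -> Y) x y : Rlinear F -> F (x - y) = F x - F y.
Proof. by move=> hF; have := hF (-1) y x; rewrite !scaleN1r addrC => ->; rewrite addrC. Qed.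
Lemma linS (R : pzRingType) (X Y : lmodType R) (F : X -> Y) (I : Type) (s : seq I) (P : I -> X) :
  Rlinear F -> F (\sum_(i <- s) P i) = \sum_(i <- s) F (P i).
Proof.
move=> hF; elim: s => [|i s IH]; first by rewrite !big_nil lin0.
by rewrite !big_cons linD // IH.
Qed.


Section Grp.
Variables (G : choiceType) (mul : G -> G -> G) (inv : G -> G) (one : G).
Hypothesis hG : is_group mul inv one.

Let mA : forall x y z, mul x (mul y z) = mul (mul x y) z. Proof. by case: hG. Qed.
Let m1l : forall x, mul one x = x. Proof. by case: hG. Qed.
Let m1r : forall x, mul x one = x. Proof. by case: hG. Qed.
Let mVl : forall x, mul (inv x) x = one. Proof. by case: hG. Qed.
Let mVr : forall x, mul x (inv x) = one. Proof. by case: hG. Qed.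
Let mulVKl x y : mul (mul x (inv y)) y = x. Proof. by rewrite -mA mVl m1r. Qed.
Let mulKVl x y : mul (mul x y) (inv y) = x. Proof. by rewrite -mA mVr m1r. Qed.

Ltac gs := rewrite ?mA ?mulVKl ?mulKVl ?mVl ?mVr ?m1l ?m1r ?mulVKl ?mulKVl ?mVl ?mVr ?m1l ?m1r
  ?mulVKl ?mulKVl ?mVl ?mVr ?m1l ?m1r.

Lemma g_invU x y : mul x y = one -> inv x = y.
Proof. move=> h; by rewrite -[inv x]m1r -h; gs. Qed.

Lemma g_invM a b : inv (mul a b) = mul (inv b) (inv a).
Proof. apply: g_invU; gs; by []. Qed.

Lemma g_inv1 : inv one = one.
Proof. by rewrite -[inv one]m1l mVr. Qed.

Lemma lcoset_mul (H : set G) g w : is_subgroup mul inv one H -> H w ->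
  lcoset mul (mul g w) H = lcoset mul g H.
Proof.
case=> H1 HM HV Hw; apply/seteqP; split => y [h Hh <-].
- by exists (mul w h); [exact: HM|rewrite mA].
- exists (mul (inv w) h); first by apply: HM => //; exact: HV.
  by gs.
Qed.

Lemma lcoset_eq (H : set G) g n : is_subgroup mul inv one H ->
  lcoset mul g H = lcoset mul n H -> exists2 w, H w & g = mul n w.
Proof.
case=> H1 _ _ E.
have : lcoset mul g H g by exists one => //; rewrite m1r.
by rewrite E => -[w Hw <-]; exists w.
Qed.

Lemma normP (V : set G) n : normalizer mul inv V n ->
  (forall v, V v -> V (mul (mul n v) (inv n))) /\
  (forall u, V u -> V (mul (mul (inv n) u) n)).
Proof.
rewrite /normalizer => E; split.
- by move=> v Vv; rewrite -E; exists v.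
- move=> u; rewrite -{1}E => -[v Vv <-]; by gs.
Qed.

Lemma normI (V : set G) n :
  (forall v, V v -> V (mul (mul n v) (inv n))) ->
  (forall u, V u -> V (mul (mul (inv n) u) n)) -> normalizer mul inv V n.
Proof.
move=> h1 h2; rewrite /normalizer; apply/seteqP; split.
- by move=> y [v Vv <-]; exact: h1.
- move=> u Vu; exists (mul (mul (inv n) u) n); first exact: h2.
  by gs.
Qed.

Lemma normM (V : set G) n1 n2 : normalizer mul inv V n1 -> normalizer mul inv V n2 ->
  normalizer mul inv V (mul n1 n2).
Proof.
move=> /normP[a1 b1] /normP[a2 b2]; apply: normI => v Vv; rewrite g_invM.
- have := a1 _ (a2 _ Vv); by gs.
- have := b2 _ (b1 _ Vv); by gs.
Qed.

Lemma norm1 (V : set G) : normalizer mul inv V one.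
Proof. by apply: normI => v Vv; rewrite g_inv1; gs. Qed.


Definition cosN (V : set G) : set (set G) := [set lcoset mul g V | g in normalizer mul inv V].
Definition rep (V : set G) (c : set G) : G :=
  xget one [set g | normalizer mul inv V g /\ c = lcoset mul g V].

Lemma rep_spec V c : cosN V c -> normalizer mul inv V (rep V c) /\ c = lcoset mul (rep V c) V.
Proof.
move=> [g Ng E]; have := @xgetI G one [set g | normalizer mul inv V g /\ c = lcoset mul g V] g.
by apply; split.
Qed.

Section Avg.
Variables (R : pzRingType) (E : lmodType R) (act : G -> E -> E).

Definition Avg (V : set G) (e : E) : E :=
  \sum_(c <- finmap.enum_fset (fset_set (cosN V))) act (rep V c) e.

Lemma memS V c : finite_set (cosN V) -> c \in finmap.enum_fset (fset_set (cosN V)) -> cosN V c.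
Proof. by move=> fin; rewrite (in_fset_set fin) => /set_mem. Qed.

Lemma Smem V c : finite_set (cosN V) -> cosN V c -> c \in finmap.enum_fset (fset_set (cosN V)).
Proof. by move=> fin /mem_set; rewrite -(in_fset_set fin). Qed.

Hypothesis hact : is_action mul one act.

Lemma AvgB V x y : Avg V (x - y) = Avg V x - Avg V y.
Proof. rewrite /Avg -sumrB; apply: eq_bigr => c _; apply: linB; by case: hact. Qed.

Lemma AvgL V a x y : Avg V (a *: x + y) = a *: Avg V x + Avg V y.
Proof.
rewrite /Avg scaler_sumr -big_split; apply: eq_bigr => c _.
by case: hact => _ _ hl; apply: hl.
Qed.

Lemma Avg_norm V n e : is_subgroup mul inv one V -> finite_set (cosN V) ->
  normalizer mul inv V n -> (forall u, V u -> act u e = e) -> Avg V (act n e) = Avg V e.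
Proof.
move=> HV fin Nn fixe.
case: hact => _ actM _.
pose tau c := lcoset mul (mul (rep V c) n) V.
have tauN c : cosN V c -> cosN V (tau c).
  by move=> cN; exists (mul (rep V c) n) => //; apply: normM => //; case: (rep_spec cN).
rewrite /Avg.
set s := finmap.enum_fset _.
have step1 : \sum_(c <- s) act (rep V c) (act n e) = \sum_(c <- s) act (rep V (tau c)) e.
  apply: eq_big_seq => c /(memS fin) cN.
  have [_ Ec'] := rep_spec (tauN c cN).
  have [w Vw ->] := lcoset_eq HV (esym Ec').
  rewrite !actM. rewrite (fixe w Vw). by [].
rewrite step1 -(big_map tau xpredT (fun c => act (rep V c) e)); apply: perm_big.
have us : uniq s by exact: finmap.fset_uniq.
have u1 : uniq (map tau s).
  rewrite map_inj_in_uniq // => c1 c2 /(memS fin) c1N /(memS fin) c2N E12.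
  have [w Vw Ew] := lcoset_eq HV E12.
  have [_ ->] := rep_spec c1N; have [_ ->] := rep_spec c2N.
  have -> : rep V c1 = mul (rep V c2) (mul (mul n w) (inv n)).
    by rewrite -[rep V c1](mulKVl _ n) Ew; gs.
  rewrite lcoset_mul //; by have [h1 _] := normP Nn; apply: h1.
apply: uniq_perm => //.
have sub : {subset map tau s <= s}.
  by move=> d /mapP[c /(memS fin) cN ->]; apply: (Smem fin); exact: tauN.
have siz : (size s <= size (map tau s))%N by rewrite size_map.
exact: (uniq_min_size u1 sub siz).2.
Qed.

End Avg.

Lemma Avg_morph (R : pzRingType) (X Y : lmodType R) (actX : G -> X -> X) (actY : G -> Y -> Y)
  (phi : X -> Y) V x :
  Gmorphism actX actY phi -> phi (Avg actX V x) = Avg actY V (phi x).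
Proof.
case=> hl he; rewrite /Avg linS //; apply: eq_bigr => c _; exact: he.
Qed.

Lemma Avg_triv (R : pzRingType) (M : lmodType R) V : finite_set (cosN V) ->
  exists2 k, (0 < k)%N & forall m, Avg (@trivial_action G R M) V m = m *+ k.
Proof.
move=> fin; exists (size (finmap.enum_fset (fset_set (cosN V)))).
  have : lcoset mul one V \in finmap.enum_fset (fset_set (cosN V)).
    by apply: (Smem fin); exists one => //; exact: norm1.
  by case: (finmap.enum_fset _).
move=> m; rewrite /Avg /trivial_action.
elim: (finmap.enum_fset _) => [|c s IH]; first by rewrite big_nil.
by rewrite big_cons IH mulrS.
Qed.

Lemma div_zero (R : pzRingType) (M : lmodType R) (m : M) k : uniquely_divisible M ->
  (0 < k)%N -> m *+ k = 0 -> m = 0.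
Proof.
move=> ud kp h; case: (ud k kp) => g fg _.
have e1 := fg m; have e2 := fg 0; simpl in e1, e2.
by rewrite -e1 h -{2}e2 mul0rn.
Qed.

Lemma triv_zero (R : pzRingType) (X M : lmodType R) (actX : G -> X -> X) (phi : X -> M) V x :
  uniquely_divisible M -> finite_set (cosN V) ->
  Gmorphism actX (@trivial_action G R M) phi -> Avg actX V x = 0 -> phi x = 0.
Proof.
move=> ud fin hphi hA; have [k kp hk] := Avg_triv M fin.
apply: (div_zero ud kp); rewrite -hk -(Avg_morph V x hphi) hA; apply: lin0; by case: hphi.
Qed.

Lemma triv_zero2 (R : pzRingType) (E M : lmodType R) (actE : G -> E -> E) (i : M -> E) V m :
  uniquely_divisible M -> finite_set (cosN V) -> injective i ->
  Gmorphism (@trivial_action G R M) actE i -> Avg actE V (i m) = 0 -> m = 0.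
Proof.
move=> ud fin ii hi hA; have [k kp hk] := Avg_triv M fin.
apply: (div_zero ud kp); apply: ii; rewrite -hk (Avg_morph V m hi) hA.
by case: hi => hl _; rewrite (lin0 hl).
Qed.

Lemma Avg_conj (R : pzRingType) (E : lmodType R) (act : G -> E -> E) (V U : set G) h e :
  is_action mul one act ->
  is_subgroup mul inv one V -> is_subgroup mul inv one U -> U `<=` V -> finite_set (cosN U) ->
  fixed_cosets mul V U = [set lcoset mul n V | n in normalizer mul inv U] ->
  (forall v, V v -> act v e = e) -> (forall u, U u -> V (mul (inv h) (mul u h))) ->
  Avg act U (act h e) = Avg act U e.
Proof.
move=> hact HV HU UV fin fc fixe hc.
have : fixed_cosets mul V U (lcoset mul h V).
  exists h => // u Uu.
  have -> : mul u h = mul h (mul (inv h) (mul u h)) by gs.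
  by apply: lcoset_mul => //; apply: hc.
rewrite fc => -[n Nn En].
have [w Vw ->] := lcoset_eq HV (esym En).
case: (hact) => _ actM _.
rewrite actM fixe //; apply: (Avg_norm hact) => // u Uu; apply: fixe; exact: UV.
Qed.

End Grp.

Section Top.
Variables (G : topologicalType) (mul : G -> G -> G) (inv : G -> G) (one : G) (B : set (set G)).
Hypothesis hPG : permutation_group mul inv one.
Hypothesis hB : open_subgroup_base mul inv one B.
Hypothesis hc : forall U V : set G, B U -> B V -> V `<=` U ->
     finite_set [set lcoset mul g V | g in normalizer mul inv V] /\
     fixed_cosets mul U V = [set lcoset mul n U | n in normalizer mul inv V].

Let hG : is_group mul inv one. Proof. by case: hPG => -[]. Qed.
Let hmc : continuous (fun p : G * G => mul p.1 p.2). Proof. by case: hPG => -[]. Qed.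

Lemma contl (a : G) : continuous (fun u => mul a u) /\ continuous (fun u => mul u a).
Proof.
split=> x.
- apply: (continuous_comp (f := fun u => (a, u)) (g := fun p : G * G => mul p.1 p.2)); last exact: hmc.
  apply: cvg_pair; [exact: cvg_cst | exact: cvg_id].
- apply: (continuous_comp (f := fun u => (u, a)) (g := fun p : G * G => mul p.1 p.2)); last exact: hmc.
  apply: cvg_pair; [exact: cvg_id | exact: cvg_cst].
Qed.

Lemma Bsub U : B U -> is_subgroup mul inv one U. Proof. by move=> BU; case: (hB.1 U BU). Qed.
Lemma Bopen U : B U -> open U. Proof. by move=> BU; case: (hB.1 U BU). Qed.

Lemma nbhs_B (W : set G) : open W -> W one -> exists2 U, B U & U `<=` W.
Proof. by move=> oW W1; apply: hB.2; apply: open_nbhs_nbhs; split. Qed.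

Lemma B_cap V1 V2 : B V1 -> B V2 -> exists2 U, B U & U `<=` V1 `&` V2.
Proof.
move=> B1 B2; apply: nbhs_B; first by apply: openI; apply: Bopen.
by split; [case: (Bsub B1) | case: (Bsub B2)].
Qed.

Lemma conj_B V h : B V -> exists2 U, B U & forall u, U u -> V (mul (inv h) (mul u h)).
Proof.
move=> BV.
have [U BU sU] : exists2 U, B U & U `<=` ((fun u => mul (inv h) (mul u h)) @^-1` V).
  apply: nbhs_B.
- have : continuous (fun u => mul (inv h) (mul u h)).
    move=> x; apply: (continuous_comp (f := fun u => mul u h) (g := fun u => mul (inv h) u)).
    + exact: (contl h).2.
    + exact: (contl (inv h)).1.
  by move/continuousP; apply; apply: Bopen.
- rewrite /preimage /=; case: hG => _ -> _ -> _; by case: (Bsub BV).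
by exists U.
Qed.

Section Mod.
Variables (R : pzRingType) (E : lmodType R) (act : G -> E -> E).
Hypothesis hact : is_action mul one act.
Hypothesis hsm : smooth_action act.

Definition SK : set E := [set e | exists2 V0, B V0 &
  forall U, B U -> U `<=` V0 -> Avg mul inv one act U e = 0].

Lemma fixV e : exists2 V, B V & forall v, V v -> act v e = e.
Proof.
have [V BV sV] : exists2 V, B V & V `<=` [set g | act g e = e].
  apply: nbhs_B; first exact: (hsm e).
  by case: hact => h1 _ _; exact: h1.
by exists V.
Qed.

Lemma Avg0 U : Avg mul inv one act U 0 = 0.
Proof. by have := AvgB inv hact U 0 0; rewrite subrr => ->; rewrite subrr. Qed.

Lemma SK0 : SK 0.
Proof.
have [V BV _] := @nbhs_B setT openT I.
by exists V => // U _ _; exact: Avg0.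
Qed.

Lemma SKlin a x y : SK x -> SK y -> SK (a *: x + y).
Proof.
move=> [V1 B1 h1] [V2 B2 h2]; have [V BV sV] := B_cap B1 B2.
exists V => // U BU UV; rewrite (AvgL inv hact).
have -> : Avg mul inv one act U x = 0 by apply: h1 => // u /UV /sV [].
have -> : Avg mul inv one act U y = 0 by apply: h2 => // u /UV /sV [].
by rewrite scaler0 addr0.
Qed.

Lemma SKdiff h e : SK (act h e - e).
Proof.
have [V BV fixe] := fixV e.
have [V1 B1 hV1] := conj_B h BV.
have [V0 B0 s0] := B_cap BV B1.
exists V0 => // U BU UV0.
have UV : U `<=` V by move=> u /UV0 /s0 [].
have [fin fc] := hc BV BU UV.
rewrite (AvgB inv hact) (Avg_conj hG hact (Bsub BV) (Bsub BU) UV fin fc fixe) ?subrr //.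
by move=> u /UV0 /s0 [_ /hV1].
Qed.

Lemma SKact h e : SK e -> SK (act h e).
Proof.
move=> Se; have -> : act h e = 1 *: e + (act h e - e) by rewrite scale1r addrC subrK.
apply: SKlin => //; exact: SKdiff.
Qed.

End Mod.

End Top.

Section Sub.
Variables (R : pzRingType) (V : lmodType R).
Record closedset := CS { cs_set : set V; cs_0 : cs_set 0;
  cs_lin : forall (a : R) x y, cs_set x -> cs_set y -> cs_set (a *: x + y) }.
Variable P : closedset.
Definition Pb : pred V := fun x => `[< cs_set P x >].
Lemma Pb_closed : subsemimod_closed Pb.
Proof.
split; first split.
- by rewrite /in_mem /= /Pb; apply/asboolP; exact: cs_0.
- move=> x y; rewrite /in_mem /= /Pb => /asboolP hx /asboolP hy; apply/asboolP.
  by have := cs_lin (c:=P) 1 hx hy; rewrite scale1r.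
- move=> a x; rewrite /in_mem /= /Pb => /asboolP hx; apply/asboolP.
  by have := cs_lin (c:=P) a hx (cs_0 P); rewrite addr0.
Qed.
Definition subT : Type := {x : V | Pb x}.
HB.instance Definition _ := SubType.on subT.
HB.instance Definition _ := Choice.on subT.
HB.instance Definition _ := GRing.SubChoice_isSubLmodule.Build R V Pb subT Pb_closed.
End Sub.
Lemma valL R V (P : closedset (R:=R) V) (a : R) (x y : subT P) : val (a *: x + y) = a *: val x + val y.
Proof. by rewrite GRing.valD GRing.valZ. Qed.

Unset Implicit Arguments. Set Strict Implicit.

Theorem lemmaA11 (G : topologicalType) (mul : G -> G -> G) (inv : G -> G) (one : G)
  (B : set (set G)) :
  permutation_group mul inv one ->
  open_subgroup_base mul inv one B ->
  (forall U V : set G, B U -> B V -> V `<=` U ->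
     finite_set [set lcoset mul g V | g in normalizer mul inv V] /\
     fixed_cosets mul U V = [set lcoset mul n U | n in normalizer mul inv V]) ->
  forall (R : pzRingType) (M : lmodType R),
    uniquely_divisible M ->
    (forall (E : lmodType R) (actE : G -> E -> E) (i : M -> E),
       smooth_module mul one actE ->
       essential_extension (@trivial_action G R M) actE i ->
       forall (g : G) (x : E), actE g x = x) /\
    (injective_Rmodule M -> injective_smooth mul one (@trivial_action G R M)).
Proof.
move=> hPG hB hc R M ud.
have hG : is_group mul inv one by case: hPG => -[].
have finB V : B V -> finite_set (cosN mul inv V).
  by move=> BV; exact: (hc V V BV BV (@subset_refl _ _)).1.
split.
- move=> E actE i [hact hsm] [hi iinj ess] g x.
  have Sobj : subobject actE (SK mul inv one B actE).
    split.
    + exact: (SK0 hB hact).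
    + move=> a x' y'; exact: (SKlin hB hact).
    + move=> g' x'; exact: (SKact hPG hB hc hact hsm).
  have S0 : SK mul inv one B actE = [set 0].
    apply: contrapT => ne; have [m [im0 Sm]] := ess _ Sobj ne.
    case: Sm => V0 BV0 hV0.
    have m0 : m = 0.
      exact: (triv_zero2 hG ud (finB V0 BV0) iinj hi (hV0 V0 BV0 (@subset_refl _ _))).
    apply: im0; rewrite m0; apply: lin0; by case: hi.
  have := SKdiff hPG hB hc hact hsm g x; rewrite S0 /= => /eqP.
  by rewrite subr_eq0 => /eqP.
- move=> injM A B0 actA actB f h [hactA hsmA] [hactB hsmB] hf finj hh.
  set S := SK mul inv one B actB.
  have fl : Rlinear f by case: hf.
  have hl : Rlinear h by case: hh.
  have SKf a : S (f a) -> h a = 0.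
    case=> V0 BV0 hV0.
    have := hV0 V0 BV0 (@subset_refl _ _); rewrite -(Avg_morph mul inv one V0 a hf) => fA.
    have A0 : Avg mul inv one actA V0 a = 0 by apply: finj; rewrite fA lin0.
    exact: (triv_zero hG ud (finB V0 BV0) hh A0).
  have Slin a x y : S x -> S y -> S (a *: x + y) by exact: (SKlin hB hactB).
  have wd a a' s s' : S s -> S s' -> f a + s = f a' + s' -> h a = h a'.
    move=> Ss Ss' E; apply/eqP; rewrite -subr_eq0 -(linB _ _ hl); apply/eqP; apply: SKf.
    have -> : f (a - a') = (-1) *: s + s'.
      rewrite (linB _ _ fl) scaleN1r -(addrK s (f a)) E [f a' + s']addrC addrAC addrK.
      by rewrite addrC.
    exact: Slin.
  pose C := [set b | exists a s, S s /\ b = f a + s].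
  have C0 : C 0.
    exists 0, 0; split; last by rewrite addr0 (lin0 fl).
    exact: (SK0 hB hactB).
  have Clin (a : R) x y : C x -> C y -> C (a *: x + y).
    move=> [a1 [s1 [S1 ->]]] [a2 [s2 [S2 ->]]].
    exists (a *: a1 + a2), (a *: s1 + s2); split; first exact: Slin.
    rewrite (fl a a1 a2) scalerDr; rewrite -!addrA; congr (_ + _).
    by rewrite addrC -!addrA; congr (_ + _); rewrite addrC.
  pose CC := @CS R B0 C C0 Clin.
  pose pa b := xget 0 [set a | exists s, S s /\ b = f a + s].
  have paP b : C b -> exists s, S s /\ b = f (pa b) + s.
    by move=> [a Ca]; apply: (@xgetI _ 0 [set a | exists s, S s /\ b = f a + s] a).
  pose psi (x : subT CC) := h (pa (val x)).
  have valC (x : subT CC) : C (val x) by have := valP x; move/asboolP.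
  have psiL : Rlinear psi.
    move=> a x y; rewrite /psi valL.
    have [sx [Sx Ex]] := paP _ (valC x).
    have [sy [Sy Ey]] := paP _ (valC y).
    have [sz [Sz Ez]] := paP _ (Clin a _ _ (valC x) (valC y)).
    rewrite -(hl a) ; apply: (wd _ _ sz (a *: sx + sy)) => //; first exact: Slin.
    rewrite -Ez (fl a) {1}Ex {1}Ey scalerDr -!addrA; congr (_ + _).
    by rewrite addrC -!addrA; congr (_ + _); rewrite addrC.
  have [k [kl kext]] := injM (subT CC) B0 val psi (@valL _ _ CC) val_inj psiL.
  have kf a : k (f a) = h a.
    have Cfa : C (f a) by exists a, 0; split; [exact: (SK0 hB hactB) | rewrite addr0].
    have := kext (exist _ (f a) (asboolT Cfa)); rewrite /= => ->; rewrite /psi /=.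
    have [s [Ss Es]] := paP _ Cfa.
    apply: (wd _ _ s 0) => //; first exact: (SK0 hB hactB).
    by rewrite -Es addr0.
  have kS s : S s -> k s = 0.
    move=> Ss; have Cs : C s by exists 0, s; split; rewrite // lin0 // add0r.
    have := kext (exist _ s (asboolT Cs)); rewrite /= => ->; rewrite /psi /=.
    have [s' [Ss' Es']] := paP _ Cs.
    rewrite -(lin0 hl); apply: (wd _ _ s' s) => //.
    by rewrite -Es' lin0 // add0r.
  exists k; split; last exact: kf.
  split => // g b; rewrite /trivial_action.
  have -> : actB g b = b + (actB g b - b) by rewrite addrC subrK.
  rewrite (linD _ _ kl) (kS (actB g b - b)) ?addr0 //.
  exact: (SKdiff hPG hB hc hactB hsmB).
Qed.
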